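(* Let $P$ be a positive integer, let subcarrier indices be taken modulo $P$, let $\mathbb{P}^{\mathrm{DL}}$ be a set of subcarrier indices, and let $\mathcal{X}:\mathbb{Z}/P\mathbb{Z}\to\mathbb{C}$ be any function. For integers $k\ge 0$ and indices $p$, let $$\mathbb{Q}^{2k+1}_p=\Big\{(q_1,\dots,q_{2k+1})\in(\mathbb{P}^{\mathrm{DL}})^{2k+1} : \textstyle\sum_{i=1}^{k+1}q_i-\sum_{i=k+2}^{2k+1}q_i\equiv p \pmod P\Big\}$$ and $$\Phi_{2k+1}[p]=\frac{1}{P^{2k+1}}\sum_{(q_1,\dots,q_{2k+1})\in\mathbb{Q}^{2k+1}_p}\ \prod_{i=1}^{k+1}\mathcal{X}[q_i]\prod_{i=k+2}^{2k+1}\overline{\mathcal{X}[q_i]}.$$ Then for every integer $k\ge 1$ and every index $p$, $$\Phi_{2k+1}[p]=\frac{1}{P^{2}}\sum_{q_1,q_2\in\mathbb{P}^{\mathrm{DL}}}\mathcal{X}[q_1]\,\mathcal{X}[q_2]\,\overline{\Phi_{2k-1}[q_1+q_2-p]},$$ and also $$\Phi_{2k+1}[p]=\frac{1}{P^{2}}\sum_{q_1,q_{k+2}\in\mathbb{P}^{\mathrm{DL}}}\mathcal{X}[q_1]\,\overline{\mathcal{X}[q_{k+2}]}\,\Phi_{2k-1}[p-q_1+q_{k+2}],$$ where all index arithmetic is modulo $P$.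
   Context: This models an OFDM system with $P$ subcarriers; $\mathbb{P}^{\mathrm{DL}}=\{p^{\mathrm{DL}}_{\mathrm{start}},\dots,p^{\mathrm{DL}}_{\mathrm{end}}\}$ is the set of downlink subcarriers, $\mathcal{X}$ plays the role of the (IQ-imbalanced) frequency-domain downlink signal $\mathcal{X}^{\mathrm{IQ}}_m$ of one OFDM symbol, and $\Phi_{2k+1}$ is the $(2k+1)$th order intermodulation-distortion nonlinear basis in the frequency domain. $\overline{z}$ denotes complex conjugation. *)

(* Defs.v *)
From HB Require Import structures.
From mathcomp Require Import all_boot all_order all_algebra.
Set Implicit Arguments. Unset Strict Implicit. Unset Printing Implicit Defensive.
Import Order.TTheory GRing.Theory Num.Theory.
Local Open Scope ring_scope.

(* Subcarrier indices modulo P = n.+1 are elements of 'I_n.+1, whose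
   additive (zmodType) structure is arithmetic modulo n.+1.
   Phi n PDL X k p  is  Phi_{2k+1}[p]  (the (2k+1)th order IMD basis). *)
Definition Phi (C : numClosedFieldType) (n : nat) (PDL : {set 'I_n.+1})
  (X : 'I_n.+1 -> C) (k : nat) (p : 'I_n.+1) : C :=
  ((n.+1)%:R ^+ (2 * k + 1))^-1 *
  \sum_(q : {ffun 'I_(2 * k + 1) -> 'I_n.+1} |
          [forall i, q i \in PDL] &&
          ((\sum_(i < 2 * k + 1 | (i < k.+1)%N) q i)
           - (\sum_(i < 2 * k + 1 | (k.+1 <= i)%N) q i) == p))
     ((\prod_(i < 2 * k + 1 | (i < k.+1)%N) X (q i)) *
      (\prod_(i < 2 * k + 1 | (k.+1 <= i)%N) (X (q i))^*)).

(* Main.v *)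
Require Import Defs.
From HB Require Import structures.
From mathcomp Require Import all_boot all_order all_algebra.
From mathcomp Require Import zify ring.
Import Order.TTheory GRing.Theory Num.Theory.
Set Implicit Arguments. Unset Strict Implicit.
Local Open Scope ring_scope.

Section S.
Variables (C : numClosedFieldType) (n : nat) (PDL : {set 'I_n.+1}) (X : 'I_n.+1 -> C).

Definition S (N : nat) (e : 'I_N -> bool) (r : 'I_n.+1) : C :=
  \sum_(q : {ffun 'I_N -> 'I_n.+1} |
     [forall i, q i \in PDL] && (\sum_(i < N) (if e i then q i else - q i) == r))
    \prod_(i < N) (if e i then X (q i) else (X (q i))^*).

Definition cnt N (e : 'I_N -> bool) := (\sum_(i < N) (e i : nat))%N.

Lemma forall_peel N (i0 : 'I_N.+1) (P : 'I_N.+1 -> bool) :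
  [forall i, P i] = P i0 && [forall j, P (lift i0 j)].
Proof.
apply/forallP/andP => [H|[H0 /forallP H] i]; first by split => //; apply/forallP.
by case: (unliftP i0 i) => [j ->|->].
Qed.

Lemma S_peel N (i0 : 'I_N.+1) e r :
  S e r = \sum_(a in PDL) (if e i0 then X a else (X a)^*) *
           S (fun j => e (lift i0 j)) (r - (if e i0 then a else - a)).
Proof.
rewrite /S.
symmetry; under eq_bigr do rewrite mulr_sumr.
rewrite pair_big_dep /=; symmetry.

pose h (x : 'I_n.+1 * {ffun 'I_N -> 'I_n.+1}) : {ffun 'I_N.+1 -> 'I_n.+1} :=
  [ffun i => if unlift i0 i is Some j then x.2 j else x.1].
pose g (q : {ffun 'I_N.+1 -> 'I_n.+1}) := (q i0, [ffun j => q (lift i0 j)]).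
rewrite (reindex h); last first.
  exists g => [[a s] _|q _]; rewrite /g /h /=.
    rewrite ffunE unlift_none; congr pair; apply/ffunP => j; by rewrite !ffunE liftK.
  apply/ffunP => i; rewrite ffunE; by case: (unliftP i0 i) => [j ->|->]; rewrite ?ffunE.
apply: eq_big => [[a s]|[a s] _] /=.
  rewrite (forall_peel i0) (bigD1_ord i0) //= /h !ffunE unlift_none.
  under eq_forallb do rewrite ffunE liftK.
  under eq_bigr do rewrite ffunE liftK.
  rewrite -andbA; congr (_ && _); congr (_ && _).
  apply/eqP/eqP => [<-|->]; first by rewrite /= addrAC subrr add0r.
  by rewrite /= addrC subrK.
rewrite (bigD1_ord i0) //= /h !ffunE unlift_none.
by under eq_bigr do rewrite ffunE liftK.
Qed.


Lemma S_ext N (e e' : 'I_N -> bool) r r' : (forall i, e i = e' i) -> r = r' -> S e r = S e' r'.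
Proof.
move=> H <-; apply: eq_big => [q|q _].
  by congr (_ && (_ == _)); apply: eq_bigr => i _; rewrite H.
by apply: eq_bigr => i _; rewrite H.
Qed.

Lemma cnt_peel N (i0 : 'I_N.+1) e : cnt e = (e i0 + cnt (fun j => e (lift i0 j)))%N.
Proof. by rewrite /cnt (bigD1_ord i0). Qed.

Lemma cnt_le N (e : 'I_N -> bool) : (cnt e <= N)%N.
Proof.
rewrite /cnt; apply: leq_trans (_ : (\sum_(i < N) 1 <= N)%N).
  by apply: leq_sum => i _; case: (e i).
by rewrite sum1_card card_ord.
Qed.

Lemma S_cnt N (e e' : 'I_N -> bool) r : cnt e = cnt e' -> S e r = S e' r.
Proof.
elim: N e e' r => [|N IH] e e' r Hc.
  by apply: eq_big => [q|q _]; rewrite !big_ord0.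
have [i0 Hi0] : exists i0, e' i0 = e ord0.
  case: (pickP (fun i => e' i == e ord0)) => [i0 /eqP|Hn]; first by exists i0.
  have He' : forall i, e' i = ~~ e ord0.
    by move=> i; move: (Hn i); case: (e' i); case: (e ord0).
  exfalso; move: Hc; rewrite (cnt_peel ord0 e) {2}/cnt.
  under eq_bigr do rewrite He'.
  rewrite sum_nat_const card_ord.
  have := cnt_le (fun j => e (lift ord0 j)).
  by case: (e ord0) => /=; lia.
rewrite (S_peel ord0) (S_peel i0) Hi0.
apply: eq_bigr => a _; congr (_ * _); apply: IH.
by move: Hc; rewrite (cnt_peel ord0 e) (cnt_peel i0 e') Hi0 => /eqP; rewrite eqn_add2l => /eqP.
Qed.

Lemma S_conj N (e : 'I_N -> bool) r : (S e r)^* = S (fun i => ~~ e i) (- r).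
Proof.
rewrite /S rmorph_sum; apply: eq_big => [q|q _].
  congr (_ && _).
  have -> : \sum_(i < N) (if ~~ e i then q i else - q i) = - \sum_(i < N) (if e i then q i else - q i).
    by rewrite -sumrN; apply: eq_bigr => i _; case: (e i); rewrite ?opprK.
  by rewrite eqr_opp.
rewrite rmorph_prod; apply: eq_bigr => i _; case: (e i) => //=; by rewrite conjCK.
Qed.

Lemma S_cast N M (E : N = M) (e : 'I_N -> bool) r :
  S e r = S (fun i => e (cast_ord (esym E) i)) r.
Proof. by case: M / E; apply: S_ext => // i; rewrite cast_ord_id. Qed.

Lemma sum_lt N m : cnt (fun i : 'I_N => (i < m)%N) = minn m N.
Proof.
elim: N => [|N IH]; first by rewrite /cnt big_ord0; lia.
rewrite /cnt big_ord_recr /= -/(cnt _).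
rewrite IH; lia.
Qed.


Lemma cnt_ext N (e e' : 'I_N -> bool) : (forall i, e i = e' i) -> cnt e = cnt e'.
Proof. by move=> H; apply: eq_bigr => i _; rewrite H. Qed.

Lemma cnt_neg N (e : 'I_N -> bool) : cnt (fun i => ~~ e i) = (N - cnt e)%N.
Proof.
have : (cnt e + cnt (fun i => ~~ e i) = N)%N.
  rewrite /cnt -big_split /=.
  rewrite (eq_bigr (fun _ => 1%N)); first by rewrite sum1_card card_ord.
  by move=> i _; case: (e i).
lia.
Qed.

Lemma Phi_S k p : Phi PDL X k p =
  ((n.+1)%:R ^+ (2 * k + 1))^-1 * S (fun i : 'I_(2 * k + 1) => (i < k.+1)%N) p.
Proof.
rewrite /Phi /S; congr (_ * _); apply: eq_big => [q|q _].
  congr (_ && (_ == _)).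
  rewrite [RHS](bigID (fun i : 'I_(2 * k + 1) => (i < k.+1)%N)) /= -sumrN.
  congr (_ + _); first by apply: eq_bigr => i ->.
  by apply: eq_big => [i|i Hi]; [rewrite -leqNgt | rewrite ifN // -leqNgt].
rewrite [RHS](bigID (fun i : 'I_(2 * k + 1) => (i < k.+1)%N)) /=.
congr (_ * _); first by apply: eq_bigr => i ->.
by apply: eq_big => [i|i Hi]; [rewrite -leqNgt | rewrite ifN // -leqNgt].
Qed.


Lemma S_peelT N (i0 : 'I_N.+1) e r : e i0 = true ->
  S e r = \sum_(a in PDL) X a * S (fun j => e (lift i0 j)) (r - a).
Proof. by move=> H; rewrite (S_peel i0) H. Qed.

Lemma S_peelF N (i0 : 'I_N.+1) e r : e i0 = false ->
  S e r = \sum_(a in PDL) (X a)^* * S (fun j => e (lift i0 j)) (r + a).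
Proof. by move=> H; rewrite (S_peel i0) H; under eq_bigr do rewrite opprK. Qed.


Lemma conj_scal (m : nat) (x : C) : ((n.+1)%:R ^- m * x)^* = (n.+1)%:R ^- m * x^*.
Proof. by rewrite rmorphM fmorphV rmorphXn rmorph_nat. Qed.

End S.

Unset Implicit Arguments. Set Strict Implicit.

Theorem lemma1 (C : numClosedFieldType) (n : nat) (PDL : {set 'I_n.+1})
  (X : 'I_n.+1 -> C) (k : nat) (hk : (1 <= k)%N) (p : 'I_n.+1) :
  Phi PDL X k p =
    ((n.+1)%:R ^+ 2)^-1 *
    \sum_(q1 in PDL) \sum_(q2 in PDL)
       X q1 * X q2 * (Phi PDL X k.-1 (q1 + q2 - p))^*
  /\
  Phi PDL X k p =
    ((n.+1)%:R ^+ 2)^-1 *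
    \sum_(q1 in PDL) \sum_(qk2 in PDL)
       X q1 * (X qk2)^* * Phi PDL X k.-1 (p - q1 + qk2).
Proof.
case: k hk => // k' _ /=.
have E : (2 * k'.+1 + 1 = (2 * k' + 1).+2)%N by lia.
rewrite Phi_S (S_cast _ _ E).
split.
- rewrite (@S_cnt _ _ _ _ _ _ (fun i : 'I_(2*k'+1).+2 => (i < 2)%N || (k'.+3 <= i)%N)); last first.
    transitivity (minn k'.+2 (2*k'+1).+2); first exact: sum_lt.
    rewrite (cnt_peel ord0) (cnt_peel ord0).
    rewrite (@cnt_ext _ _ (fun j : 'I_(2*k'+1) => ~~ (j < k'.+1)%N)); last by move=> j; rewrite /= /bump /=; lia.
    rewrite cnt_neg sum_lt /= /bump /=; lia.
  rewrite (S_peelT _ _ (i0 := ord0)) // !mulr_sumr; apply: eq_bigr => a _.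
  rewrite (S_peelT _ _ (i0 := ord0)) // !mulr_sumr; apply: eq_bigr => b _.
  have -> : S PDL X (fun j : 'I_(2*k'+1) => (lift ord0 (lift ord0 j) < 2)%N || (k'.+2 < lift ord0 (lift ord0 j))%N) (p - a - b)
     = S PDL X (fun j : 'I_(2*k'+1) => ~~ (j < k'.+1)%N) (- (a + b - p)).
    by apply: S_ext => [j|]; [rewrite /= /bump /=; lia | rewrite opprB opprD addrA].
  rewrite -S_conj Phi_S conj_scal.
  have -> : (2 * k'.+1 + 1 = 2 + (2 * k' + 1))%N by lia.
  rewrite exprD invfM; ring.
- rewrite (@S_cnt _ _ _ _ _ _ (fun i : 'I_(2*k'+1).+2 => ((i : nat) == 0)%N || ((1 < i)%N && (i < k'.+3)%N))); last first.
    transitivity (minn k'.+2 (2*k'+1).+2); first exact: sum_lt.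
    rewrite (cnt_peel ord0) (cnt_peel ord0).
    rewrite (@cnt_ext _ _ (fun j : 'I_(2*k'+1) => (j < k'.+1)%N)); last by move=> j; rewrite /= /bump /=; lia.
    rewrite sum_lt /= /bump /=; lia.
  rewrite (S_peelT _ _ (i0 := ord0)) // !mulr_sumr; apply: eq_bigr => a _.
  rewrite (S_peelF _ _ (i0 := ord0)) // !mulr_sumr; apply: eq_bigr => b _.
  have -> : S PDL X (fun j : 'I_(2*k'+1) => ((lift ord0 (lift ord0 j) : nat) == 0)%N || ((1 < lift ord0 (lift ord0 j))%N && (lift ord0 (lift ord0 j) < k'.+3)%N)) (p - a + b)
     = S PDL X (fun j : 'I_(2*k'+1) => (j < k'.+1)%N) (p - a + b).
    by apply: S_ext => // j; rewrite /= /bump /=; lia.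
  rewrite Phi_S.
  have -> : (2 * k'.+1 + 1 = 2 + (2 * k' + 1))%N by lia.
  rewrite exprD invfM; ring.
Qed.
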